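(* In the setting described in the context, for $n\ge1$ let $u_n=\min\{x\in[d,v]: f^{2n}(x)=d\}$; for $n,k\ge1$ let $u'_{n,k}=\max\{x\in[u_{n+1},u_n]: f^{2n+2k}(x)=d\}$; and for $n,k,i\ge1$ let $u_{n,k,i}=\min\{x\in[u'_{n,k},u'_{n,k+1}]: f^{2n+2k+2i}(x)=d\}$ (these sets are nonempty). Then for each $n\ge1$, $k\ge1$, $i\ge1$, on the interval $[u'_{n,k},u_{n,k,i}]$ the map $f$ has no periodic points whose least period is odd and $\le 2n+2k+2i+1$, and no periodic points whose least period is even and $\le 2n+2k+2i$ except points of least period $2n+2k+2i$ and possibly points of least period $2n+2k$ or $2n$.
   Context: Let $I$ be a compact interval and $f:I\to I$ continuous; $f^1=f$, $f^n=f\circ f^{n-1}$. A point $x_0$ is a periodic point of least period $k$ (a period-$k$ point) if $f^k(x_0)=x_0$ and $f^i(x_0)\ne x_0$ for $0<i<k$. Let $m\ge3$ be odd and let $P$ be a periodic orbit of $f$ of least period $m$. Put $e=f^{m-1}(\min P)$. Let $v\in[\min P,e)$ be a point with $f(v)=e$, and let $z\in(v,e)$ be a fixed point of $f$ (such points exist). Define $z_0=\min\{x\in[v,z]: f^2(x)=x\}$ and $d=\max\{x\in[\min P,v]: f^2(x)=z_0\}$ (both sets are nonempty). *)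

(* Defs.v *)
From Stdlib Require Import Reals Arith.
Open Scope R_scope.

Definition iter (f : R -> R) (n : nat) (x : R) : R := Nat.iter n f x.

Definition cont_on (f : R -> R) (a b : R) : Prop :=
  forall x, a <= x <= b -> forall eps, eps > 0 ->
    exists delta, delta > 0 /\
      forall y, a <= y <= b -> Rabs (y - x) < delta -> Rabs (f y - f x) < eps.

Definition maps_into (f : R -> R) (a b : R) : Prop :=
  forall x, a <= x <= b -> a <= f x <= b.

Definition least_period (f : R -> R) (k : nat) (x : R) : Prop :=
  (0 < k)%nat /\ iter f k x = x /\
  forall i, (0 < i < k)%nat -> iter f i x <> x.

Definition is_min (S : R -> Prop) (x : R) : Prop := S x /\ forall y, S y -> x <= y.
Definition is_max (S : R -> Prop) (x : R) : Prop := S x /\ forall y, S y -> y <= x.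

(* Main.v *)
Require Import Defs.
From Stdlib Require Import Reals Arith Lra Lia.
Open Scope R_scope.

Definition clamp (a b t : R) := Rmax a (Rmin b t).

Lemma clamp_in a b x : a <= x <= b -> clamp a b x = x.
Proof. intros H; unfold clamp, Rmax, Rmin; repeat destruct Rle_dec; lra. Qed.

Lemma clamp_range a b t : a <= b -> a <= clamp a b t <= b.
Proof. intros H; unfold clamp, Rmax, Rmin; repeat destruct Rle_dec; lra. Qed.

Lemma clamp_lip a b x y : a <= b -> Rabs (clamp a b y - clamp a b x) <= Rabs (y - x).
Proof.
  intros H; unfold clamp, Rmax, Rmin; repeat destruct Rle_dec;
  unfold Rabs; repeat destruct Rcase_abs; lra.
Qed.

Lemma cont_ext f a b : a <= b -> cont_on f a b -> continuity (fun t => f (clamp a b t)).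
Proof.
  intros Hab Hc x0 eps Heps.
  destruct (Hc (clamp a b x0) (clamp_range a b x0 Hab) eps Heps) as [del [Hd Hy]].
  exists del; split; auto.
  intros x [_ Hx]. simpl in *. unfold R_dist in *.
  apply Hy. apply clamp_range; auto.
  eapply Rle_lt_trans. apply clamp_lip; auto. auto.
Qed.

Lemma iter_F f a b k x : maps_into f a b -> a <= x <= b ->
  iter (fun t => f (clamp a b t)) k x = iter f k x /\ a <= iter f k x <= b.
Proof.
  intros Hm Hx; induction k as [|k IH]; simpl; auto.
  unfold iter in *; simpl. destruct IH as [IH1 IH2].
  rewrite IH1, clamp_in; auto.
Qed.

Lemma iter_in f a b k x : maps_into f a b -> a <= x <= b -> a <= iter f k x <= b.
Proof. intros; apply (iter_F f a b k x); auto. Qed.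

Lemma cont_iter F k : continuity F -> continuity (iter F k).
Proof.
  intros HF; induction k as [|k IH].
  - unfold iter; simpl. exact (derivable_continuous _ derivable_id).
  - assert (E : iter F (S k) = comp F (iter F k)) by reflexivity.
    rewrite E. apply continuity_comp; auto.
Qed.

Lemma ivt_gen (H : R -> R) x1 x2 t : continuity H -> x1 <= x2 ->
  (H x1 <= t <= H x2 \/ H x2 <= t <= H x1) -> exists y, x1 <= y <= x2 /\ H y = t.
Proof.
  intros Hc Hle Hb.
  assert (Hc' : continuity (fun y => H y - t)).
  { apply continuity_minus; auto. apply continuity_const. intros u v; auto. }
  destruct (IVT_cor (fun y => H y - t) x1 x2 Hc' Hle) as [y [Hy1 Hy2]].
  - destruct Hb as [[B1 B2]|[B1 B2]].
    + 
      replace ((H x1 - t) * (H x2 - t)) with (- ((t - H x1) * (H x2 - t))) by ring.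
      assert (0 <= (t - H x1) * (H x2 - t)) by (apply Rmult_le_pos; lra). lra.
    + replace ((H x1 - t) * (H x2 - t)) with (- ((H x1 - t) * (t - H x2))) by ring.
      assert (0 <= (H x1 - t) * (t - H x2)) by (apply Rmult_le_pos; lra). lra.
  - exists y; split; auto. lra.
Qed.

Lemma min_gen (H : R -> R) x1 x2 : continuity H -> x1 <= x2 ->
  (exists y, x1 <= y <= x2 /\ H y = 0) ->
  exists mu, x1 <= mu <= x2 /\ H mu = 0 /\ forall y, x1 <= y <= x2 -> H y = 0 -> mu <= y.
Proof.
  intros Hc Hle [y0 [Hy0 Hy0']].
  set (E := fun z => forall s, x1 <= s <= x2 -> H s = 0 -> z <= s).
  assert (Hb : bound E). { exists y0. intros z Hz. apply Hz; auto. }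
  assert (Hne : exists z, E z). { exists x1. intros s Hs _. lra. }
  destruct (completeness E Hb Hne) as [mu [Hub Hlub]].
  assert (Hx1 : x1 <= mu). { apply Hub. intros s Hs _; lra. }
  assert (Hmu_s : forall s, x1 <= s <= x2 -> H s = 0 -> mu <= s).
  { intros s Hs Hs0. apply Hlub. intros z Hz. apply Hz; auto. }
  assert (Hmu2 : mu <= y0) by (apply Hmu_s; auto).
  exists mu. split; [lra|]. split; auto.
  destruct (Req_dec (H mu) 0) as [E0|Ne]; auto.
  exfalso.
  assert (Hpos : Rabs (H mu) > 0) by (apply Rabs_pos_lt; auto).
  destruct (Hc mu (Rabs (H mu)) Hpos) as [alp [Halp Hal]].
  assert (HE : E (mu + alp/2)).
  { intros s Hs Hs0. destruct (Rle_dec (mu + alp/2) s) as [L|L]; auto.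
    exfalso. assert (mu <= s) by (apply Hmu_s; auto).
    assert (Hne2 : mu <> s). { intro Eq. subst s. apply Ne; auto. }
    specialize (Hal s). simpl in Hal. unfold R_dist in Hal.
    assert (Habs : Rabs (s - mu) < alp). { rewrite Rabs_right; lra. }
    specialize (Hal (conj (conj I Hne2) Habs)).
    rewrite Hs0 in Hal. replace (0 - H mu) with (- H mu) in Hal by ring.
    rewrite Rabs_Ropp in Hal. lra. }
  specialize (Hub _ HE). lra.
Qed.


Lemma ivt_iter f a b k x1 x2 t : a <= b -> cont_on f a b -> maps_into f a b ->
  a <= x1 -> x1 <= x2 -> x2 <= b ->
  (iter f k x1 <= t <= iter f k x2 \/ iter f k x2 <= t <= iter f k x1) ->
  exists y, x1 <= y <= x2 /\ iter f k y = t.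
Proof.
  intros Hab Hc Hm H1 H12 H2 Hb.
  set (F := fun t => f (clamp a b t)).
  assert (HF : continuity (iter F k)) by (apply cont_iter, cont_ext; auto).
  assert (E1 : iter F k x1 = iter f k x1) by (apply (iter_F f a b k x1); auto; lra).
  assert (E2 : iter F k x2 = iter f k x2) by (apply (iter_F f a b k x2); auto; lra).
  destruct (ivt_gen (iter F k) x1 x2 t HF H12) as [y [Hy Hy']].
  - rewrite E1, E2; auto.
  - exists y; split; auto. rewrite <- Hy'. symmetry. apply (iter_F f a b k y); auto; lra.
Qed.

Lemma ivt_fix f a b k x1 x2 : a <= b -> cont_on f a b -> maps_into f a b ->
  a <= x1 -> x1 <= x2 -> x2 <= b ->
  ((iter f k x1 - x1) * (iter f k x2 - x2) <= 0) ->
  exists y, x1 <= y <= x2 /\ iter f k y = y.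
Proof.
  intros Hab Hc Hm H1 H12 H2 Hb.
  set (F := fun t => f (clamp a b t)).
  assert (HF : continuity (fun y => iter F k y - y)).
  { apply continuity_minus. apply cont_iter, cont_ext; auto.
    exact (derivable_continuous _ derivable_id). }
  assert (E1 : iter F k x1 = iter f k x1) by (apply (iter_F f a b k x1); auto; lra).
  assert (E2 : iter F k x2 = iter f k x2) by (apply (iter_F f a b k x2); auto; lra).
  destruct (IVT_cor (fun y => iter F k y - y) x1 x2 HF H12) as [y [Hy Hy']].
  - simpl. rewrite E1, E2; auto.
  - exists y; split; auto.
    assert (iter F k y = iter f k y) by (apply (iter_F f a b k y); auto; lra). lra.
Qed.

Lemma min_iter f a b k x1 x2 t : a <= b -> cont_on f a b -> maps_into f a b ->
  a <= x1 -> x1 <= x2 -> x2 <= b ->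
  (exists y, x1 <= y <= x2 /\ iter f k y = t) ->
  exists mu, x1 <= mu <= x2 /\ iter f k mu = t /\
    forall y, x1 <= y <= x2 -> iter f k y = t -> mu <= y.
Proof.
  intros Hab Hc Hm H1 H12 H2 [y0 [Hy0 Hy0']].
  set (F := fun t => f (clamp a b t)).
  assert (HF : continuity (fun y => iter F k y - t)).
  { apply continuity_minus. apply cont_iter, cont_ext; auto.
    apply continuity_const. intros u v; auto. }
  assert (EE : forall y, x1 <= y <= x2 -> iter F k y = iter f k y)
    by (intros y Hy; apply (iter_F f a b k y); auto; lra).
  destruct (min_gen (fun y => iter F k y - t) x1 x2 HF H12) as [mu [Hmu [Hmu1 Hmu2]]].
  - exists y0; split; auto. rewrite EE; auto. lra.
  - exists mu. split; auto. split. rewrite <- EE; auto. lra.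
    intros y Hy Hy'. apply Hmu2; auto. rewrite EE; auto. lra.
Qed.

Lemma G_add f p q x : iter f (2*(p+q)) x = iter f (2*p) (iter f (2*q) x).
Proof. unfold iter. replace (2*(p+q))%nat with (2*p + 2*q)%nat by lia. apply Nat.iter_add. Qed.

Lemma iter_1 f x : iter f 1 x = f x.
Proof. reflexivity. Qed.
Lemma iter_2 f x : iter f 2 x = f (f x).
Proof. reflexivity. Qed.
Lemma iter_S f k x : iter f (S k) x = f (iter f k x).
Proof. reflexivity. Qed.
Lemma iter_mul f p x : iter f p x = x -> forall q, iter f (p*q) x = x.
Proof.
  intros H q; induction q as [|q IH]. rewrite Nat.mul_0_r; reflexivity.
  replace (p * S q)%nat with (p + p*q)%nat by lia. unfold iter in *. rewrite Nat.iter_add, IH; auto.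
Qed.



Theorem lemma12 (a b : R) (f : R -> R) (m : nat) (q v z z0 d : R)
  (n k i : nat) (un un1 w w1 c : R) :
  a <= b -> cont_on f a b -> maps_into f a b ->
  (3 <= m)%nat -> Nat.odd m = true ->
  a <= q <= b -> least_period f m q -> (forall j, q <= iter f j q) ->
  let e := iter f (m - 1) q in
  q <= v < e -> f v = e ->
  v < z < e -> f z = z ->
  is_min (fun x => v <= x <= z /\ iter f 2 x = x) z0 ->
  is_max (fun x => q <= x <= v /\ iter f 2 x = z0) d ->
  (1 <= n)%nat -> (1 <= k)%nat -> (1 <= i)%nat ->
  is_min (fun x => d <= x <= v /\ iter f (2 * n) x = d) un ->
  is_min (fun x => d <= x <= v /\ iter f (2 * (n + 1)) x = d) un1 ->
  is_max (fun x => un1 <= x <= un /\ iter f (2 * n + 2 * k) x = d) w ->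
  is_max (fun x => un1 <= x <= un /\ iter f (2 * n + 2 * (k + 1)) x = d) w1 ->
  is_min (fun x => w <= x <= w1 /\ iter f (2 * n + 2 * k + 2 * i) x = d) c ->
  forall (x : R) (p : nat), w <= x <= c -> least_period f p x ->
    (Nat.odd p = true -> (2 * n + 2 * k + 2 * i + 1 < p)%nat) /\
    (Nat.even p = true -> (p <= 2 * n + 2 * k + 2 * i)%nat ->
       p = (2 * n + 2 * k + 2 * i)%nat \/ p = (2 * n + 2 * k)%nat \/ p = (2 * n)%nat).
Proof.
  intros Hab Hc Hm Hm3 Hodd Hq Hlp Hqmin e Hv Hfv Hz Hfz [Hz0 Hz0min] [Hd Hdmax]
    Hn Hk Hi [Hun Hunmin] [Hun1 Hun1min] [Hw Hwmax] [Hw1 Hw1max] [Hcc Hcmin] x p Hx Hxp.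
  assert (IVT : forall kk x1 x2 t, a <= x1 -> x1 <= x2 -> x2 <= b ->
    (iter f kk x1 <= t <= iter f kk x2 \/ iter f kk x2 <= t <= iter f kk x1) ->
    exists y, x1 <= y <= x2 /\ iter f kk y = t)
    by (intros; eapply (ivt_iter f a b); eauto).
  assert (FIX : forall kk x1 x2, a <= x1 -> x1 <= x2 -> x2 <= b ->
    ((iter f kk x1 - x1) * (iter f kk x2 - x2) <= 0) ->
    exists y, x1 <= y <= x2 /\ iter f kk y = y)
    by (intros; eapply (ivt_fix f a b); eauto).
  assert (He : a <= e <= b) by (apply iter_in; auto).
  assert (Hfe : f e = q).
  { destruct Hlp as [_ [Hlp _]]. unfold e. rewrite <- iter_S.
    replace (S (m-1)) with m by lia. auto. }
  assert (Hqv : q < v).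
  { destruct (Rle_lt_or_eq_dec q v) as [L|E]; [lra|auto|].
    exfalso. destruct Hlp as [_ [_ Hlp]]. apply (Hlp 2%nat); [lia|].
    rewrite iter_2, E, Hfv; fold e; rewrite Hfe; auto. }
  assert (Hgv : iter f 2 v = q) by (rewrite iter_2, Hfv; auto).
  assert (Hvz0 : v < z0).
  { destruct Hz0 as [[H1 H2] H3]. destruct (Rle_lt_or_eq_dec v z0 H1) as [L|E]; auto.
    subst z0. rewrite Hgv in H3. lra. }
  destruct Hz0 as [[Hz01 Hz02] Hgz0].
  destruct Hd as [[Hd1 Hd2] Hgd].
  assert (Pg_lt : forall y, v <= y < z0 -> iter f 2 y < y).
  { intros y Hy. destruct (Rlt_le_dec (iter f 2 y) y) as [L|L]; auto. exfalso.
    destruct (FIX 2%nat v y) as [t [Ht Ht']]; try lra.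
    rewrite Hgv. assert (0 <= iter f 2 y - y) by lra.
    assert ((q - v) * (iter f 2 y - y) <= 0); [|auto].
    replace ((q - v) * (iter f 2 y - y)) with (-((v-q) * (iter f 2 y - y))) by ring.
    assert (0 <= (v-q) * (iter f 2 y - y)) by (apply Rmult_le_pos; lra). lra.
    assert (z0 <= t) by (apply Hz0min; split; [lra|auto]). lra. }
  assert (Pf_gt : forall y, v <= y < z0 -> y < f y).
  { intros y Hy. destruct (Rlt_le_dec y (f y)) as [L|L]; auto. exfalso.
    destruct (FIX 1%nat v y) as [t [Ht Ht']]; try lra.
    rewrite !iter_1, Hfv.
    replace ((e - v) * (f y - y)) with (-((e-v) * (y - f y))) by ring.
    assert (0 <= (e-v) * (y - f y)) by (apply Rmult_le_pos; lra). lra.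
    rewrite iter_1 in Ht'.
    assert (z0 <= t) by (apply Hz0min; split; [lra|rewrite iter_2, !Ht'; auto]). lra. }
  assert (Pfz0 : z0 <= f z0).
  { destruct (Rle_lt_dec z0 (f z0)) as [L|L]; auto. exfalso.
    destruct (FIX 1%nat v z0) as [t [Ht Ht']]; try lra.
    rewrite !iter_1, Hfv.
    replace ((e - v) * (f z0 - z0)) with (-((e-v) * (z0 - f z0))) by ring.
    assert (0 <= (e-v) * (z0 - f z0)) by (apply Rmult_le_pos; lra). lra.
    rewrite iter_1 in Ht'.
    assert (z0 <= t) by (apply Hz0min; split; [lra|rewrite iter_2, !Ht'; auto]).
    assert (t = z0) by lra. subst t. lra. }
  assert (Pv : forall y, d < y <= v -> iter f 2 y < z0).
  { intros y Hy. destruct (Rlt_le_dec (iter f 2 y) z0) as [L|L]; auto. exfalso.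
    destruct (IVT 2%nat y v z0) as [s [Hs Hs']]; try lra.
    assert (s <= d) by (apply Hdmax; split; [lra|auto]). lra. }
  assert (Pg : forall y, d < y < z0 -> iter f 2 y < z0).
  { intros y Hy. destruct (Rle_lt_dec y v). apply Pv; lra.
    assert (iter f 2 y < y) by (apply Pg_lt; lra). lra. }
  assert (Pfy : forall y, d < y < z0 -> z0 <= f y).
  { intros y Hy. destruct (Rle_lt_dec z0 (f y)) as [L|L]; auto. exfalso.
    destruct (Rle_lt_dec y v) as [Hyv|Hyv].
    - destruct (IVT 1%nat z0 e z0) as [t [Ht Ht']]; try lra.
      rewrite !iter_1; fold e; lra.
      destruct (IVT 1%nat y v t) as [s [Hs Hs']]; try lra.
      rewrite !iter_1; lra.
      rewrite iter_1 in Ht', Hs'.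
      assert (s <= d) by (apply Hdmax; split; [lra|rewrite iter_2, Hs'; auto]). lra.
    - assert (y < f y) by (apply Pf_gt; lra).
      assert (f y < f (f y)) by (apply Pf_gt; lra).
      assert (iter f 2 y < y) by (apply Pg_lt; lra). rewrite iter_2 in *. lra. }

  assert (Ga : forall j, a <= iter f j d <= b) by (intros; apply iter_in; auto; lra).
  assert (Gz0 : forall j, iter f (2*j) z0 = z0).
  { induction j as [|j IH]; [reflexivity|].
    replace (S j) with (1 + j)%nat by lia. rewrite G_add, IH. exact Hgz0. }
  assert (Gd : forall j, (1 <= j)%nat -> iter f (2*j) d = z0).
  { intros j Hj. replace j with ((j-1)+1)%nat by lia. rewrite G_add.
    change (iter f (2*1) d) with (iter f 2 d). rewrite Hgd. apply Gz0. }
  set (isU := fun j u => d <= u <= v /\ iter f (2*j) u = d /\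
     forall y, d <= y <= v -> iter f (2*j) y = d -> u <= y).
  assert (Pre : forall j, (1 <= j)%nat -> exists t, d <= t <= v /\ iter f (2*j) t = d).
  { intros j Hj. induction j as [|j IH]; [lia|].
    destruct (Nat.eq_dec j 0) as [E|E].
    - subst j. apply IVT; try lra. change (2*1)%nat with 2%nat. rewrite Hgv, Hgd. lra.
    - destruct IH as [t [Ht Ht']]; [lia|].
      destruct (IVT 2%nat d v t) as [y [Hy Hy']]; try lra.
      exists y; split; auto. replace (S j) with (j+1)%nat by lia. rewrite G_add.
      change (2*1)%nat with 2%nat. rewrite Hy'. auto. }
  assert (Uex : forall j, (1 <= j)%nat -> exists u, isU j u).
  { intros j Hj. destruct (min_iter f a b (2*j) d v d Hab Hc Hm) as [u [Hu [Hu' Hu'']]];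
      try lra. apply Pre; auto. exists u. split; auto. }
  assert (Upos : forall j u, (1 <= j)%nat -> isU j u -> d < u).
  { intros j u Hj [H1 [H2 H3]]. destruct (Rle_lt_or_eq_dec d u) as [L|E]; try lra.
    subst u. rewrite Gd in H2; auto. lra. }
  assert (Uuniq : forall j u u', isU j u -> isU j u' -> u = u').
  { intros j u u' [H1 [H2 H3]] [H1' [H2' H3']].
    assert (u <= u') by (apply H3; auto). assert (u' <= u) by (apply H3'; auto). lra. }
  assert (Ustep : forall j u u', (1 <= j)%nat -> isU j u -> isU (j+1)%nat u' -> u' < u).
  { intros j u u' Hj Hu Hu'. destruct (Uex 1%nat) as [u1 Hu1]; auto.
    assert (d < u1) by (apply (Upos 1%nat); auto).
    destruct Hu as [H1 [H2 H3]]. destruct Hu1 as [H1a [H2a H3a]]. destruct Hu' as [H1' [H2' H3']].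
    destruct (IVT (2*j)%nat d u u1) as [y [Hy Hy']]; try lra.
    rewrite H2, Gd; auto. lra.
    assert (u' <= y). { apply H3'. lra. replace (j+1)%nat with (1+j)%nat by lia.
      rewrite G_add, Hy'. auto. }
    destruct (Rle_lt_or_eq_dec y u) as [L|E]; try lra. subst y. rewrite H2 in Hy'. lra. }
  assert (Umono : forall j l u u', (1 <= j)%nat -> (j < l)%nat -> isU j u -> isU l u' -> u' < u).
  { intros j l u u' Hj Hjl. replace l with (j + S (l - j - 1))%nat by lia.
    generalize (l - j - 1)%nat. intros t. revert u'. induction t as [|t IH]; intros u' Hu Hu'.
    - apply (Ustep j); auto.
    - destruct (Uex (j + S t)%nat) as [u'' Hu'']; [lia|].
      assert (u'' < u) by (apply IH; auto).
      assert (u' < u''). { apply (Ustep (j + S t)%nat); auto. lia.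
        replace (j + S t + 1)%nat with (j + S (S t))%nat by lia. auto. }
      lra. }
  assert (Umono_le : forall j l u u', (1 <= j)%nat -> (j <= l)%nat -> isU j u -> isU l u' -> u' <= u).
  { intros j l u u' Hj Hjl Hu Hu'. destruct (Nat.eq_dec j l) as [E|E].
    subst l. rewrite (Uuniq j u' u); auto. lra.
    assert (u' < u) by (apply (Umono j l); auto; lia). lra. }
  assert (S1 : forall mm um y, (1 <= mm)%nat -> isU mm um -> d <= y <= um ->
     forall j u', (1 <= j)%nat -> (j < mm)%nat -> isU (mm - j)%nat u' -> u' <= iter f (2*j) y).
  { intros mm um y Hmm Hum Hy j u' Hj Hjm Hu'.
    destruct (Rle_lt_dec u' (iter f (2*j) y)) as [L|L]; auto. exfalso.
    destruct Hum as [H1 [H2 H3]]. destruct Hu' as [H1' [H2' H3']].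
    destruct (IVT (2*j)%nat d y u') as [t [Ht Ht']]; try lra.
    rewrite Gd; auto. lra.
    assert (um <= t). { apply H3. lra. replace mm with ((mm - j) + j)%nat by lia.
      rewrite G_add, Ht'. auto. }
    destruct (Rle_lt_or_eq_dec t y) as [L2|E]; try lra. subst t. lra. }
  assert (S2 : forall mm um y, (1 <= mm)%nat -> isU mm um -> d <= y <= um ->
     d <= iter f (2*mm) y).
  { intros mm um y Hmm Hum Hy.
    destruct (Rle_lt_dec d (iter f (2*mm) y)) as [L|L]; auto. exfalso.
    destruct Hum as [H1 [H2 H3]].
    destruct (IVT (2*mm)%nat d y d) as [t [Ht Ht']]; try lra.
    rewrite Gd; auto. lra.
    assert (um <= t) by (apply H3; auto; lra).
    destruct (Rle_lt_or_eq_dec t y) as [L2|E]; try lra. subst t. lra. }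
  assert (S0 : forall mm um y, (1 <= mm)%nat -> isU mm um -> d <= y <= um ->
     forall j, (1 <= j <= mm)%nat -> d <= iter f (2*j) y).
  { intros mm um y Hmm Hum Hy j Hj. destruct (Nat.eq_dec j mm) as [E|E].
    subst j. apply (S2 mm um); auto.
    destruct (Uex (mm - j)%nat) as [u' Hu']; [lia|].
    assert (u' <= iter f (2*j) y) by (apply (S1 mm um y) ; auto; lia).
    destruct Hu' as [[? ?] _]. lra. }

  assert (HunU : isU n un).
  { split; [apply Hun|]. split; [apply Hun|]. intros y Hy Hy'. apply Hunmin; auto. }
  assert (Hun1U : isU (n+1)%nat un1).
  { split; [apply Hun1|]. split; [apply Hun1|]. intros y Hy Hy'. apply Hun1min; auto. }
  destruct Hw as [Hw Hwd]. destruct Hw1 as [Hw1 Hw1d]. destruct Hcc as [Hcc Hcd].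
  replace (2 * n + 2 * k)%nat with (2 * (n + k))%nat in Hwd, Hwmax by lia.
  replace (2 * n + 2 * k + 2 * i)%nat with (2 * (i + (n + k)))%nat in Hcd, Hcmin by lia.
  replace (2 * n + 2 * (k + 1))%nat with (2 * ((k + 1) + n))%nat in Hw1d, Hw1max by lia.
  assert (Hdun1 : d < un1) by (apply (Upos (n+1)%nat); auto; lia).
  assert (Hw1un : w1 < un).
  { destruct (Rle_lt_or_eq_dec w1 un) as [L|E]; try lra. subst w1.
    rewrite G_add, (proj1 (proj2 HunU)), Gd in Hw1d; lia || lra. }
  destruct Hxp as [Hp0 [Hpx Hpmin]].
  assert (Per := iter_mul f p x Hpx).
  assert (Hxz0 : x < z0) by lra.
  assert (NoHit : forall j, iter f (2*j) x <> d).
  { intros j Hj.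
    assert (H1 : iter f (2*(j+1)) x = z0).
    { replace (j+1)%nat with (1+j)%nat by lia. rewrite G_add, Hj. exact Hgd. }
    assert (H2 : iter f (2*((p*(j+1) - (j+1)) + (j+1))) x = z0) by (rewrite G_add, H1; apply Gz0).
    replace ((p*(j+1) - (j+1)) + (j+1))%nat with (p*(j+1))%nat in H2 by nia.
    replace (2 * (p * (j + 1)))%nat with (p * (2 * (j+1)))%nat in H2 by lia.
    rewrite Per in H2. lra. }
  destruct (Uex k Hk) as [uk HukU].
  destruct (Uex i Hi) as [ui HuiU].
  set (A := iter f (2*n) x).
  set (B := iter f (2*(n+k)) x).
  assert (HxU : d <= x <= un) by lra.
  assert (HA1 : d <= A) by (apply (S2 n un); auto).
  assert (HA2 : A <= uk).
  { destruct (Rle_lt_dec A uk) as [L|L]; auto. exfalso.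
    destruct HukU as [Hu1 [Hu2 Hu3]].
    destruct (IVT (2*n)%nat x un uk) as [t [Ht Ht']]; try lra.
    rewrite (proj1 (proj2 HunU)). unfold A in L. lra.
    assert (t <= w). { apply Hwmax. split. lra. rewrite Nat.add_comm, G_add, Ht'. auto. }
    destruct (Rle_lt_or_eq_dec x t) as [L2|E]; try lra. subst t. unfold A in L. lra. }
  assert (HB1 : d <= B).
  { destruct (Rle_lt_dec d B) as [L|L]; auto. exfalso.
    destruct (IVT (2*(n+k))%nat x un d) as [t [Ht Ht']]; try lra.
    assert (E1 : iter f (2*(n+k)) un = z0).
    { replace (n+k)%nat with (k+n)%nat by lia. rewrite G_add, (proj1 (proj2 HunU)), Gd; auto. }
    rewrite E1. unfold B in L. lra.
    assert (t <= w) by (apply Hwmax; split; [lra|auto]).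
    destruct (Rle_lt_or_eq_dec x t) as [L2|E]; try lra. subst t. unfold B in L. lra. }
  assert (HB2 : B <= ui).
  { destruct (Rle_lt_dec B ui) as [L|L]; auto. exfalso.
    destruct HuiU as [Hu1 [Hu2 Hu3]].
    destruct (IVT (2*(n+k))%nat w x ui) as [t [Ht Ht']]; try lra.
    rewrite Hwd. unfold B in L. lra.
    assert (c <= t). { apply Hcmin. split. lra. rewrite G_add, Ht'. auto. }
    destruct (Rle_lt_or_eq_dec t x) as [L2|E]; try lra. subst t. unfold B in L. lra. }
  assert (HAB : iter f (2*k) A = B).
  { unfold A, B. rewrite <- G_add. f_equal. lia. }
  assert (Low : forall j, (j <= n + k + i)%nat -> d < iter f (2*j) x).
  { intros j Hj. assert (d <= iter f (2*j) x); [|specialize (NoHit j); lra].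
    destruct (Nat.eq_dec j 0) as [E|E]. subst j. simpl. lra.
    destruct (le_lt_dec j n) as [L1|L1].
    apply (S0 n un x); auto; lia.
    destruct (le_lt_dec j (n+k)) as [L2|L2].
    replace j with ((j-n)+n)%nat by lia. rewrite G_add. apply (S0 k uk A); auto; lia.
    replace j with ((j-(n+k))+(n+k))%nat by lia. rewrite G_add. apply (S0 i ui B); auto; lia. }
  assert (Up : forall j, (j <= n + k + i)%nat -> iter f (2*j) x < z0).
  { induction j as [|j IH]; intros Hj. simpl; lra.
    replace (S j) with (1 + j)%nat by lia. rewrite G_add.
    apply Pg. split. apply Low; lia. apply IH; lia. }
  split.
  - intros Hp. apply Nat.odd_spec in Hp. destruct Hp as [s Hs].
    destruct (le_lt_dec p (2 * n + 2 * k + 2 * i + 1)) as [L|L]; auto. exfalso.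
    assert (Hs' : (s <= n + k + i)%nat) by lia.
    assert (z0 <= f (iter f (2*s) x)) by (apply Pfy; split; [apply Low|apply Up]; auto).
    rewrite <- iter_S in H. replace (S (2*s)) with p in H by lia. lra.
  - intros Hp HpN. apply Nat.even_spec in Hp. destruct Hp as [r Hr].
    assert (Hr1 : (1 <= r)%nat) by lia.
    assert (Hrx : iter f (2*r) x = x) by (rewrite <- Hr; auto).
    assert (HrN : (r <= n + k + i)%nat) by lia.

    destruct (Nat.eq_dec r (n+k+i)) as [E|E]. left; lia.
    destruct (Nat.eq_dec r (n+k)) as [E2|E2]. right; left; lia.
    destruct (Nat.eq_dec r n) as [E3|E3]. right; right; lia.
    exfalso.
    destruct (lt_dec r n) as [C1|C1].
    { destruct (Uex (n - r)%nat) as [u' Hu']; [lia|].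
      assert (u' <= iter f (2*r) x) by (apply (S1 n un x); auto; lia).
      assert (un < u') by (apply (Umono (n-r)%nat n); auto; lia). lra. }
    destruct (lt_dec r (n+k)) as [C2|C2].
    { set (l := (r - n)%nat).
      assert (HlA : iter f (2*l) A = x).
      { unfold A. rewrite <- G_add. replace (l+n)%nat with r by (unfold l; lia). auto. }
      destruct (Uex (k - l)%nat) as [u' Hu']; [unfold l; lia|].
      assert (u' <= x) by (rewrite <- HlA; apply (S1 k uk A); auto; unfold l; lia).
      destruct (le_lt_dec (k - l) n) as [D|D].
      { assert (un <= u') by (apply (Umono_le (k-l)%nat n); auto; unfold l; lia). lra. }
      assert (HnA : iter f (2*(n+l)) A = A) by (rewrite G_add, HlA; auto).
      destruct (Uex (k - (n+l))%nat) as [u2 Hu2]; [unfold l; lia|].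
      assert (u2 <= A) by (rewrite <- HnA; apply (S1 k uk A); auto; unfold l; lia).
      assert (uk < u2) by (apply (Umono (k-(n+l))%nat k); auto; unfold l; lia). lra. }
    { set (l := (r - (n+k))%nat).
      assert (HlB : iter f (2*l) B = x).
      { unfold B. rewrite <- G_add. replace (l+(n+k))%nat with r by (unfold l; lia). auto. }
      destruct (Uex (i - l)%nat) as [u' Hu']; [unfold l; lia|].
      assert (u' <= x) by (rewrite <- HlB; apply (S1 i ui B); auto; unfold l; lia).
      destruct (le_lt_dec (i - l) n) as [D|D].
      { assert (un <= u') by (apply (Umono_le (i-l)%nat n); auto; unfold l; lia). lra. }
      assert (HnB : iter f (2*(n+l)) B = A) by (rewrite G_add, HlB; auto).
      destruct (Uex (i - (n+l))%nat) as [u2 Hu2]; [unfold l; lia|].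
      assert (u2 <= A) by (rewrite <- HnB; apply (S1 i ui B); auto; unfold l; lia).
      destruct (lt_eq_lt_dec (i - (n+l)) k) as [[D2|D2]|D2].
      { assert (uk < u2) by (apply (Umono (i-(n+l))%nat k); auto; unfold l; lia). lra. }
      { rewrite D2 in Hu2. assert (u2 = uk) by (apply (Uuniq k); auto).
        assert (A = uk) by lra.
        apply (NoHit (n+k)%nat). fold B. rewrite <- HAB, H2. apply HukU. }
      assert (HkB : iter f (2*(k+(n+l))) B = B).
      { rewrite G_add, HnB. auto. }
      destruct (Uex (i - (k+(n+l)))%nat) as [u3 Hu3]; [unfold l; lia|].
      assert (u3 <= B) by (rewrite <- HkB; apply (S1 i ui B); auto; unfold l; lia).
      assert (ui < u3) by (apply (Umono (i-(k+(n+l)))%nat i); auto; unfold l; lia). lra. }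
Qed.
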